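(* Let $m,\delta$ be positive integers, let $X=\{x_1,\dots,x_m\}$ be a set of numbers with $x_1>x_2>\dots>x_m\ge 0$, and let $\alpha=(\alpha_1,\dots,\alpha_\ell)$ be a $\delta$-deviation set of size $m$. Put $c_0=0$ and $c_j=\sum_{1\le i\le j}\alpha_i$ for $j\ge 1$, and $$\Delta(X,\alpha)=\Big|\sum_{j=0}^{\ell-1}(-1)^j\sum_{c_j<i\le c_{j+1}}x_i\Big|.$$ Then $\Delta(X,\alpha)\le \delta\cdot x_1$.
   Context: For positive integers $m$ and $\delta$, a $\delta$-deviation set of size $m$ is a finite sequence $(\alpha_1,\alpha_2,\dots,\alpha_\ell)$ of positive integers such that (i) $\sum_i\alpha_i=m$; (ii) $\big|\sum_i\alpha_{2i-1}-\sum_i\alpha_{2i}\big|\le 1$; (iii) $\big|\sum_{1\le i\le j}(-1)^{i-1}\alpha_i\big|\le\delta$ for every $j\ge 1$. *)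

(* Defs.v *)
From mathcomp Require Import all_boot all_order all_algebra.
Set Implicit Arguments. Unset Strict Implicit. Unset Printing Implicit Defensive.
Import Order.TTheory GRing.Theory Num.Theory.
Local Open Scope ring_scope.

(* A sequence a = [:: a_1; ...; a_l] is stored 0-indexed: a`_k = alpha_(k+1). *)

(* sum_{1 <= i <= j} (-1)^(i-1) alpha_i   (alpha_i := 0 for i > l) *)
Definition alt_prefix (a : seq nat) (j : nat) : int :=
  \sum_(0 <= k < minn j (size a)) (-1) ^+ k * (nth 0%N a k)%:Z.

(* sum_i alpha_(2i-1)  (odd positions, 1-indexed) *)
Definition odd_pos_sum (a : seq nat) : int :=
  \sum_(0 <= k < size a | ~~ odd k) (nth 0%N a k)%:Z.
(* sum_i alpha_(2i)  (even positions, 1-indexed) *)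
Definition even_pos_sum (a : seq nat) : int :=
  \sum_(0 <= k < size a | odd k) (nth 0%N a k)%:Z.

Definition deviation_set (m delta : nat) (a : seq nat) : Prop :=
  [/\ all (fun t => 0 < t)%N a,
      sumn a = m,
      `|odd_pos_sum a - even_pos_sum a| <= 1
    & forall j : nat, (1 <= j)%N -> `|alt_prefix a j| <= delta%:Z].

Definition cpart (a : seq nat) (j : nat) : nat := sumn (take j a).

Definition Delta (R : numDomainType) (x : nat -> R) (a : seq nat) : R :=
  `| \sum_(0 <= j < size a)
        (-1) ^+ j * \sum_((cpart a j).+1 <= i < (cpart a j.+1).+1) x i |.

(* Main.v *)
Require Import Defs.
From mathcomp Require Import all_boot all_order all_algebra.
From mathcomp Require Import ring lra zify.
Import Order.TTheory GRing.Theory Num.Theory.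
Local Open Scope ring_scope.

Lemma block_lem (R : realFieldType) (x : nat -> R) (D s : R) (al : nat) :
  forall p c, (forall k, (k <= al)%N -> `|p + s * k%:R| <= D) ->
  (forall i, (c < i)%N -> (i <= c + al)%N -> x i.+1 <= x i) ->
  `|p * x c.+1 + s * \sum_(c.+1 <= i < (c + al)%N.+1) x i - (p + s * al%:R) * x (c + al)%N.+1|
    <= D * (x c.+1 - x (c + al)%N.+1).
Proof.
elim: al => [|al IH] p c Hk Hm.
  by rewrite addn0 big_geq // mulr0n !(mulr0, addr0, subrr) normr0.
rewrite big_ltn; last by lia.
have IH' := IH (p + s) c.+1.
rewrite addSnnS in IH'.
have e : (p + s * al.+1%:R) = (p + s) + s * al%:R by rewrite -natr1; ring.
rewrite e.
set A := x c.+1; set B := x c.+2; set Z := x (c + al.+1)%N.+1.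
set S := \sum_(_ <= i < _) x i.

have -> : p * A + s * (A + S) - (p + s + s * al%:R) * Z
   = (p + s) * (A - B) + ((p + s) * B + s * S - (p + s + s * al%:R) * Z) by ring.
have h1 : `|p + s| <= D by have := Hk 1%N; rewrite mulr1; apply; lia.
have hAB : 0 <= A - B by rewrite subr_ge0; apply: Hm; lia.
apply: le_trans (ler_normD _ _) _.
rewrite normrM (ger0_norm hAB).
have -> : D * (A - Z) = D * (A - B) + D * (B - Z) by ring.
apply: lerD; first by apply: ler_wpM2r.
apply: IH'.
- move=> k hk; have := Hk k.+1; rewrite -natr1.
  have -> : p + s * (k%:R + 1) = p + s + s * k%:R by ring. apply; lia.
- move=> i h3 h4; apply: Hm; lia.
Qed.

Lemma last_lem (R : realFieldType) (x : nat -> R) (D s : R) (be : nat) p c :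
  (forall k, (k <= be.+1)%N -> `|p + s * k%:R| <= D) ->
  (forall i, (c < i)%N -> (i < c + be.+1)%N -> x i.+1 <= x i) ->
  0 <= x (c + be.+1)%N ->
  `|p * x c.+1 + s * \sum_(c.+1 <= i < (c + be.+1)%N.+1) x i| <= D * x c.+1.
Proof.
move=> Hk Hm H0.
rewrite big_nat_recr /=; last by lia.
have Hb := @block_lem R x D s be p c.
have {Hb}Hb := Hb (fun k hk => Hk k (leqW hk)).
have {Hb}Hb := Hb (fun i h1 h2 => Hm i h1 ltac:(lia)).
move: H0; rewrite addnS => H0.
set L := x (c + be)%N.+1 in Hb H0 *.
set S := \sum_(_ <= i < _) x i in Hb *.
have -> : p * x c.+1 + s * (S + L) = (p * x c.+1 + s * S - (p + s * be%:R) * L) + (p + s * be.+1%:R) * L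
  by rewrite -natr1; ring.
apply: le_trans (ler_normD _ _) _.
have -> : D * x c.+1 = D * (x c.+1 - L) + D * L by ring.
apply: lerD; first exact: Hb.
rewrite normrM (ger0_norm H0); apply: ler_wpM2r => //; exact: Hk.
Qed.

Lemma conv (R : realFieldType) (D s p : R) (al : nat) (e : nat) :
  s = (-1) ^+ e -> `|p| <= D -> `|p + s * al%:R| <= D ->
  forall k, (k <= al)%N -> `|p + s * k%:R| <= D.
Proof.
move=> -> H1 H2 k hk.
have hk' : (k%:R <= al%:R :> R) by rewrite ler_nat.
have hk0 : (0 <= k%:R :> R) by [].
move: H1 H2; rewrite -signr_odd; case: (odd e); rewrite ?expr1 ?expr0 ?mulN1r ?mul1r !ler_norml;
  move=> /andP[? ?] /andP[? ?]; apply/andP; split; lra.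
Qed.

Definition Rest (R : realFieldType) (x : nat -> R) (a : seq nat) (e c : nat) : R :=
  \sum_(0 <= j < size a) (-1) ^+ (e + j)%N *
     \sum_((c + cpart a j)%N.+1 <= i < (c + cpart a j.+1)%N.+1) x i.

Lemma alt_cons al a j : alt_prefix (al :: a) j.+1 = al%:Z - alt_prefix a j.
Proof.
rewrite /alt_prefix /= minnSS big_nat_recl // expr0 mul1r; congr (_ + _).
rewrite -sumrN; apply: eq_bigr => k _ /=; by rewrite exprS mulN1r mulNr.
Qed.

Lemma alt0 a : alt_prefix a 0 = 0.
Proof. by rewrite /alt_prefix min0n big_geq. Qed.

Lemma Rest_cons (R : realFieldType) (x : nat -> R) (al : nat) (a : seq nat) (e c : nat) :
  @Rest R x (al :: a) e c = (-1) ^+ e * \sum_(c.+1 <= i < (c + al)%N.+1) x i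
     + @Rest R x a e.+1 (c + al)%N.
Proof.
rewrite /Rest /= big_nat_recl //; congr (_ + _).
  by rewrite /cpart /= take0 !addn0.
apply: eq_bigr => j _; rewrite /cpart /= addnS addSn !addnA //.
Qed.

Lemma mainQ (R : realFieldType) (x : nat -> R) (D : R) (a : seq nat) :
  forall e c p, (0 < size a)%N -> all (fun t => 0 < t)%N a -> `|p| <= D ->
  (forall j, (1 <= j)%N -> `|p + (-1) ^+ e * (alt_prefix a j)%:~R| <= D) ->
  (forall i, (c < i)%N -> (i < c + sumn a)%N -> x i.+1 <= x i) ->
  0 <= x (c + sumn a)%N ->
  `|p * x c.+1 + @Rest R x a e c| <= D * x c.+1.
Proof.
elim: a => [|al a IH] e c p //= _ /andP[hal hall] hp H Hm H0.
rewrite Rest_cons.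
set s := (-1) ^+ e : R.
have H1 : `|p + s * al%:R| <= D.
  by have := H 1%N (leqnn _); rewrite alt_cons alt0 subr0 -pmulrn.
have Hk := @conv R D s p al e erefl hp H1.
case: a IH hall H Hm H0 => [|b a'] IH hall H Hm H0.
  have -> : @Rest R x [::] e.+1 (c + al)%N = 0 by rewrite /Rest big_geq.
  rewrite addr0.
  case: al hal H1 Hk Hm H0 H => [|be] // _ H1 Hk Hm H0 H.
  apply: last_lem => //.
    by move=> i h1 h2; apply: Hm => //; rewrite /= addn0 in h2 *.
  by rewrite /= addn0 in H0.
set a := b :: a' in IH H Hm H0 *.
have hsa : (0 < sumn a)%N by rewrite /a /=; move: hall => /= /andP[hb _]; lia.
have IH' := IH e.+1 (c + al)%N (p + s * al%:R) erefl hall H1.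
have Hb := @block_lem R x D s al p c Hk (fun i h1 h2 => Hm i h1 ltac:(lia)).
set S := \sum_(_ <= i < _) x i in Hb *.
set B := x (c + al)%N.+1 in Hb IH' *.
have -> : p * x c.+1 + (s * S + @Rest R x a e.+1 (c + al)) =
   (p * x c.+1 + s * S - (p + s * al%:R) * B) + ((p + s * al%:R) * B + @Rest R x a e.+1 (c + al)) by ring.
apply: le_trans (ler_normD _ _) _.
have -> : D * x c.+1 = D * (x c.+1 - B) + D * B by ring.
apply: lerD; first exact: Hb.
apply: IH'.
- move=> j hj; have := H j.+1 isT; rewrite alt_cons intrB -pmulrn /s exprS.
  by have -> : p + (-1) ^+ e * (al%:R - (alt_prefix a j)%:~R)
     = p + (-1) ^+ e * al%:R + -1 * (-1) ^+ e * (alt_prefix a j)%:~R by ring.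
- by move=> i h1 h2; apply: Hm; lia.
- by rewrite -addnA.
Qed.

Theorem lemma1 (R : realFieldType) (m delta : nat) (x : nat -> R) (a : seq nat) :
  (0 < m)%N -> (0 < delta)%N ->
  (forall i : nat, (1 <= i)%N -> (i < m)%N -> x i.+1 < x i) ->
  0 <= x m ->
  deviation_set m delta a ->
  Delta x a <= delta%:R * x 1%N.
Proof.
move=> hm hd Hx H0 [hall hsum _ Hpre].
have -> : Delta x a = `|0 * x 1%N + @Rest R x a 0 0|.
  rewrite /Delta /Rest mul0r add0r; congr (`| _ |); apply: eq_bigr => j _.
apply: (@mainQ R x _ a 0 0 0).
- by move: hm; rewrite -hsum; case: (a).
- exact: hall.
- by rewrite normr0.
- move=> j hj; rewrite add0r expr0 mul1r -intr_norm -[_%:R]/((delta%:Z)%:~R) ler_int.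
  exact: Hpre.
- by move=> i h1 h2; apply: ltW; apply: Hx => //; rewrite -hsum.
- by rewrite add0n hsum.
Qed.
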